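(* There exist constants $c_1,c_2>0$ such that for all $n\ge1$, $c_1(3/4)^n\le 1-\mathcal{C}^*(n)\le c_2(3/4)^n$; that is, $1-\mathcal{C}^*(n)=\Theta\big((3/4)^n\big)$.
   Context: The concentratable entanglement of an $n$-qubit pure state is $\mathcal{C}(\ket{\psi})=1-\frac{1}{2^{n}}\sum_{\alpha\subseteq [n]}\mathrm{Tr}[\rho_\alpha^2]$ ($\rho_\alpha$ the reduced state on $\alpha$, $\mathrm{Tr}[\rho_\emptyset^2]=1$), and $\mathcal{C}^*(n)=\max_{\ket{\psi}}\mathcal{C}(\ket{\psi})$ over $n$-qubit pure states. *)

(* Defs.v *)
From HB Require Import structures.
From mathcomp Require Import all_boot all_order all_algebra.
From mathcomp Require Import complex.
From mathcomp Require Import classical_sets reals.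
Set Implicit Arguments. Unset Strict Implicit. Unset Printing Implicit Defensive.
Import Order.TTheory GRing.Theory Num.Theory.
Local Open Scope ring_scope.
Local Open Scope classical_set_scope.

Section QState.
Variable R : realType.
Variable n : nat.

(* computational basis labels of n qubits *)
Definition bits := {ffun 'I_n -> bool}.

(* an n-qubit (unnormalized) pure state vector in C^(2^n) *)
Definition qstate := {ffun bits -> R[i]}.

Definition normalized (psi : qstate) : Prop :=
  \sum_(x : bits) psi x * conjc (psi x) = 1.

(* basis labels of the subsystem alpha: labels that are 0 outside alpha *)
Definition on_sub (alpha : {set 'I_n}) (x : bits) : bool :=
  [forall i, (i \notin alpha) ==> ~~ x i].

Definition merge (alpha : {set 'I_n}) (x y : bits) : bits :=
  [ffun i => if i \in alpha then x i else y i].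

(* matrix entries <x|rho_alpha|x'> of the reduced state on alpha
   (partial trace over the complement of alpha) *)
Definition rho (alpha : {set 'I_n}) (psi : qstate) (x x' : bits) : R[i] :=
  \sum_(y : bits | on_sub (~: alpha) y)
     psi (merge alpha x y) * conjc (psi (merge alpha x' y)).

Definition purity (alpha : {set 'I_n}) (psi : qstate) : R[i] :=
  \sum_(x : bits | on_sub alpha x) \sum_(x' : bits | on_sub alpha x')
     rho alpha psi x x' * rho alpha psi x' x.

(* concentratable entanglement (the purities are real; we take real parts) *)
Definition conc_ent (psi : qstate) : R :=
  1 - (2 ^+ n)^-1 * \sum_(alpha : {set 'I_n}) complex.Re (purity alpha psi).

(* C*(n) = max (= sup) over normalized n-qubit pure states *)
Definition Cstar : R :=
  sup [set c | exists psi : qstate, normalized psi /\ c = conc_ent psi].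

End QState.

(* Main.v *)
Require Import Defs.
From HB Require Import structures.
From mathcomp Require Import all_boot all_order all_algebra.
From mathcomp Require Import complex.
From mathcomp Require Import classical_sets reals.
From mathcomp Require Import ring lra.
Set Implicit Arguments. Unset Strict Implicit. Unset Printing Implicit Defensive.
Import Order.TTheory GRing.Theory Num.Theory.
Local Open Scope ring_scope.

Section Aux.
Variable R : realType.
Variable n : nat.

Local Notation mg := Defs.merge.
Let z0 : bits n := [ffun _ => false].

Lemma onsubE (al : {set 'I_n}) (x : bits n) :
  on_sub al x = [forall i, (i \in al) || ~~ x i].
Proof. by apply: eq_forallb => i; rewrite implybE negbK. Qed.

Lemma onsub_prod (al : {set 'I_n}) (x : bits n) :
  (on_sub al x)%:R = \prod_(i < n) ((i \in al) || ~~ x i)%:R :> R.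
Proof.
rewrite onsubE; case: forallP => H.
  by rewrite big1 // => i _; rewrite H.
have [i Hi] : exists i, ~~ ((i \in al) || ~~ x i).
  apply/existsP; apply: contraT; rewrite negb_exists => /forallP H'.
  by exfalso; apply: H => i; have := H' i; rewrite negbK.
by rewrite (bigD1 i) //= (negbTE Hi) mul0r.
Qed.

Lemma count_onsub (al : {set 'I_n}) :
  \sum_(x : bits n | on_sub al x) (1:R) = \prod_(i < n) (1 + (i \in al)%:R).
Proof.
rewrite big_mkcond /=.
rewrite (eq_bigr (fun x => (on_sub al x)%:R)); last by move=> x _; case: on_sub.
under eq_bigr do rewrite onsub_prod.
rewrite -(bigA_distr_bigA (fun (i : 'I_n) (b : bool) => ((i \in al) || ~~ b)%:R)) /=.
apply: eq_bigr => i _; rewrite big_bool /= orbT orbF addrC //.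
Qed.

Lemma sum_sets (F : bool -> R) :
  \sum_(A : {set 'I_n}) \prod_(i < n) F (i \in A) = (F true + F false) ^+ n.
Proof.
have -> : (F true + F false) ^+ n = \prod_(i < n) \sum_(b : bool) F b.
  by rewrite prodr_const card_ord big_bool.
rewrite (bigA_distr_bigA (fun (i : 'I_n) (b : bool) => F b)) /=.
rewrite (reindex (fun f : {ffun 'I_n -> bool} => [set i | f i])) /=.
  by apply: eq_bigr => f _; apply: eq_bigr => i _; rewrite inE.
exists (fun A : {set 'I_n} => [ffun i => i \in A]) => [f _|A _].
  by apply/ffunP => i; rewrite ffunE inE.
by apply/setP => i; rewrite inE ffunE.
Qed.

Lemma merge_proj1 (al : {set 'I_n}) (x y : bits n) :
  (mg al (mg al x y) z0 == x) = on_sub al x.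
Proof.
have -> : mg al (mg al x y) z0 = mg al x z0.
  by apply/ffunP => i; rewrite !ffunE; case: (i \in al).
rewrite onsubE; apply/idP/idP => [/eqP H|/forallP H].
  by apply/forallP => i; rewrite -H /z0 !ffunE; case: (i \in al).
suff E : mg al x z0 = x by rewrite E eqxx.
apply/ffunP => i; rewrite /z0 !ffunE; case: ifP => // Hi.
by have := H i; rewrite Hi /= => /negbTE ->.
Qed.

Lemma merge_proj2 (al : {set 'I_n}) (x y : bits n) :
  (mg al z0 (mg al x y) == y) = on_sub (~: al) y.
Proof.
have -> : mg al z0 (mg al x y) = mg al z0 y.
  by apply/ffunP => i; rewrite !ffunE; case: (i \in al).
rewrite onsubE; apply/idP/idP => [/eqP H|/forallP H].
  by apply/forallP => i; rewrite -H /z0 !ffunE inE; case: (i \in al).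
suff E : mg al z0 y = y by rewrite E eqxx.
apply/ffunP => i; rewrite /z0 !ffunE; case: ifP => // Hi.
by have := H i; rewrite inE Hi /= => /negbTE ->.
Qed.

Lemma sum_merge (V : zmodType) (al : {set 'I_n}) (g : bits n -> V) :
  \sum_(z : bits n) g z =
  \sum_(x | on_sub al x) \sum_(y | on_sub (~: al) y) g (mg al x y).
Proof.
rewrite pair_big_dep /=.
rewrite (reindex_onto (fun p : bits n * bits n => mg al p.1 p.2)
   (fun z => (mg al z z0, mg al z0 z))) /=.
  apply: eq_bigl => -[x y] /=.
  by rewrite xpair_eqE merge_proj1 merge_proj2.
by move=> z _; apply/ffunP => i; rewrite !ffunE; case: (i \in al).
Qed.

Lemma merge_inj (al : {set 'I_n}) (x y x' y' : bits n) :
  on_sub al x -> on_sub al x' -> on_sub (~: al) y -> on_sub (~: al) y' ->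
  mg al x y = mg al x' y' -> x = x' /\ y = y'.
Proof.
move=> Hx Hx' Hy Hy' E.
have e1 := merge_proj1 al x y; have e2 := merge_proj1 al x' y'.
have e3 := merge_proj2 al x y; have e4 := merge_proj2 al x' y'.
rewrite Hx in e1; rewrite Hx' in e2; rewrite Hy in e3; rewrite Hy' in e4.
move/(@eqP (bits n)): e1 => e1; move/(@eqP (bits n)): e2 => e2.
move/(@eqP (bits n)): e3 => e3; move/(@eqP (bits n)): e4 => e4.
by split; [rewrite -e1 -e2 E | rewrite -e3 -e4 E].
Qed.

End Aux.



Section Lower.
Variable R : realType.
Variable n : nat.
Local Notation mg := Defs.merge.

Lemma rho_conj (al : {set 'I_n}) (psi : qstate R n) x x' :
  rho al psi x' x = conjc (rho al psi x x').
Proof.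
rewrite /rho rmorph_sum; apply: eq_bigr => y _.
by rewrite rmorphM /= conjcK mulrC.
Qed.

Lemma Re_mulJ (a : R[i]) : complex.Re (a * conjc a) = complex.Re a ^+ 2 + complex.Im a ^+ 2.
Proof. by case: a => a b /=; ring. Qed.

Lemma lower_al (al : {set 'I_n}) (psi : qstate R n) : normalized psi ->
  (\sum_(x : bits n | on_sub al x) (1:R))^-1 <= complex.Re (purity al psi).
Proof.
move=> Hn.
set c := \sum_(x : bits n | on_sub al x) (1:R).
have cpos : 0 < c.
  rewrite /c count_onsub; apply: prodr_gt0 => i _.
  by apply: (@lt_le_trans _ _ 1); [exact: ltr01 | rewrite lerDl ler0n].
set d := fun x => complex.Re (rho al psi x x).
have Hd1 : \sum_(x : bits n | on_sub al x) d x = 1.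
  rewrite /d -raddf_sum /rho -(sum_merge al (fun z => psi z * conjc (psi z))).
  by rewrite Hn.
have E : forall x x', complex.Re (rho al psi x x' * rho al psi x' x) =
    complex.Re (rho al psi x x') ^+ 2 + complex.Im (rho al psi x x') ^+ 2.
  by move=> x x'; rewrite (rho_conj al psi x x') Re_mulJ.
have Hp : \sum_(x : bits n | on_sub al x) d x ^+ 2 <= complex.Re (purity al psi).
  rewrite /purity raddf_sum; apply: ler_sum => x Hx.
  rewrite raddf_sum (bigD1 x) //= E.
  rewrite -addrA lerDl; apply: addr_ge0; first exact: sqr_ge0.
  by apply: sumr_ge0 => x' _; rewrite E; apply: addr_ge0; apply: sqr_ge0.
apply: le_trans Hp.
have H0 : 0 <= \sum_(x : bits n | on_sub al x) (d x - c^-1) ^+ 2.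
  by apply: sumr_ge0 => x _; apply: sqr_ge0.
have E2 : \sum_(x : bits n | on_sub al x) (d x - c^-1) ^+ 2 =
   \sum_(x : bits n | on_sub al x) d x ^+ 2 - 2 * c^-1 * (\sum_(x : bits n | on_sub al x) d x)
   + c^-1 ^+ 2 * c.
  rewrite mulr_sumr [X in _ + X]mulr_sumr -sumrB -big_split /=.
  by apply: eq_bigr => x _; ring.
rewrite E2 Hd1 in H0.
have E3 : c^-1 ^+ 2 * c = c^-1 by rewrite expr2 -mulrA mulVf ?mulr1 // gt_eqF.
rewrite E3 in H0; lra.
Qed.

End Lower.



Section Upper.
Variable R : realType.
Variable n : nat.
Local Notation mg := Defs.merge.

Lemma realCM (a b : R) : real_complex R (a * b) = real_complex R a * real_complex R b.
Proof. exact: rmorphM. Qed.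

Lemma realC_sum (I : finType) (P : pred I) (F : I -> R) :
  real_complex R (\sum_(i | P i) F i) = \sum_(i | P i) real_complex R (F i).
Proof. exact: rmorph_sum. Qed.

Definition sg (b : bool) : R := if b then -1 else 1.
Definition sq : R := Num.sqrt ((2 ^+ n)^-1).
Definition psif (f : {ffun bits n -> bool}) : qstate R n :=
  [ffun z => real_complex R (sq * sg (f z))].

Lemma sq2 : sq ^+ 2 = (2 ^+ n)^-1.
Proof. by rewrite /sq sqr_sqrtr // invr_ge0 exprn_ge0 // ler0n. Qed.

Lemma card_bits : \sum_(z : bits n) (1:R) = 2 ^+ n.
Proof. by rewrite sumr_const card_ffun card_bool card_ord natrX. Qed.

Lemma sg2 b : sg b * sg b = 1.
Proof. by case: b; rewrite /sg ?mulrNN mulr1. Qed.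

Lemma psif_norm f : normalized (psif f).
Proof.
rewrite /normalized.
rewrite (eq_bigr (fun _ => real_complex R (sq ^+ 2))); last first.
  move=> z _; rewrite ffunE conjc_real -realCM; congr (real_complex R _).
  by rewrite mulrACA sg2 mulr1 expr2.
rewrite -realC_sum sumr_const -mulr_natr -sumr_const card_bits sq2 mulVf //.
by rewrite expf_neq0 // pnatr_eq0.
Qed.

Lemma purity_psif (al : {set 'I_n}) f :
  complex.Re (purity al (psif f)) = sq ^+ 4 *
  \sum_(x : bits n | on_sub al x) \sum_(x' : bits n | on_sub al x')
  \sum_(y : bits n | on_sub (~: al) y) \sum_(y' : bits n | on_sub (~: al) y')
    sg (f (mg al x y)) * sg (f (mg al x' y)) * sg (f (mg al x' y')) * sg (f (mg al x y')).
Proof.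
have Er : forall x x', rho al (psif f) x x' =
   real_complex R (sq ^+ 2 * \sum_(y : bits n | on_sub (~: al) y) sg (f (mg al x y)) * sg (f (mg al x' y))).
  move=> x x'; rewrite /rho mulr_sumr realC_sum; apply eq_bigr => y _.
  rewrite /psif !ffunE conjc_real -realCM; congr (real_complex R _); ring.
rewrite /purity raddf_sum mulr_sumr; apply: eq_bigr => x _.
rewrite raddf_sum mulr_sumr; apply: eq_bigr => x' _.
rewrite !Er -realCM /=.
rewrite mulrACA -exprD big_distrlr /= [LHS]mulr_sumr [RHS]mulr_sumr; apply eq_bigr => y _.
rewrite [LHS]mulr_sumr [RHS]mulr_sumr; apply eq_bigr => y' _.
by rewrite !mulrA.
Qed.

Lemma sg_neg b : sg (~~ b) = - sg b.
Proof. by case: b; rewrite /sg /= ?opprK. Qed.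

Lemma flip_sum (a b c d : bits n) : a != b -> a != c -> a != d ->
  \sum_(f : {ffun bits n -> bool}) sg (f a) * sg (f b) * sg (f c) * sg (f d) = 0.
Proof.
move=> ab ac ad.
pose fl (f : {ffun bits n -> bool}) : {ffun bits n -> bool} :=
  [ffun z => if z == a then ~~ f z else f z].
have flK : involutive fl.
  by move=> f; apply/ffunP => z; rewrite !ffunE; case: (z == a); rewrite ?negbK.
have H : forall S : R, S = - S -> S = 0 by move=> S; lra.
apply: H.
rewrite {1}(reindex_inj (inv_inj flK)) /= -sumrN; apply: eq_bigr => f _.
rewrite !ffunE eqxx [b == a]eq_sym [c == a]eq_sym [d == a]eq_sym.
rewrite (negbTE ab) (negbTE ac) (negbTE ad) sg_neg; ring.
Qed.

Lemma sgT_le1 b1 b2 b3 b4 : sg b1 * sg b2 * sg b3 * sg b4 <= 1.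
Proof. by case: b1; case: b2; case: b3; case: b4; rewrite /sg; lra. Qed.

Definition Kf : R := \sum_(f : {ffun bits n -> bool}) (1:R).

Lemma Kf_ge1 : 1 <= Kf.
Proof.
rewrite /Kf (bigD1 [ffun _ => false]) //= lerDl.
by apply: sumr_ge0 => *; exact: ler01.
Qed.

Lemma Tbound (al : {set 'I_n}) x x' y y' :
  on_sub al x -> on_sub al x' -> on_sub (~: al) y -> on_sub (~: al) y' ->
  \sum_(f : {ffun bits n -> bool})
    sg (f (mg al x y)) * sg (f (mg al x' y)) * sg (f (mg al x' y')) * sg (f (mg al x y'))
  <= Kf * ((x == x')%:R + (y == y')%:R).
Proof.
move=> Hx Hx' Hy Hy'.
have K0 : 0 <= Kf by apply: le_trans Kf_ge1; exact: ler01.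
case: (boolP ((x == x') || (y == y'))) => H.
  apply: (@le_trans _ _ Kf).
    by apply: ler_sum => f _; apply: sgT_le1.
  rewrite -{1}(mulr1 Kf); apply: ler_wpM2l => //.
  by move: H; case: (x == x'); case: (y == y') => //= _; rewrite ?mulr1n ?mulr0n; lra.
move: H; rewrite negb_or => /andP [Hxx Hyy].
rewrite flip_sum.
- by apply: mulr_ge0 => //; apply: addr_ge0; apply: ler0n.
- apply/negP => /(@eqP (bits n)) E; have [E1 _] := merge_inj Hx Hx' Hy Hy E.
  by rewrite E1 eqxx in Hxx.
- apply/negP => /(@eqP (bits n)) E; have [E1 _] := merge_inj Hx Hx' Hy Hy' E.
  by rewrite E1 eqxx in Hxx.
- apply/negP => /(@eqP (bits n)) E; have [_ E1] := merge_inj Hx Hx Hy Hy' E.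
  by rewrite E1 eqxx in Hyy.
Qed.

End Upper.



Section Upper2.
Variable R : realType.
Variable n : nat.
Local Notation mg := Defs.merge.

Lemma sumC (P : pred (bits n)) (a : R) :
  \sum_(i | P i) a = a * \sum_(i | P i) 1.
Proof. by rewrite mulr_sumr; apply: eq_bigr => *; rewrite mulr1. Qed.

Lemma sum_eq1 (P : pred (bits n)) y : P y -> \sum_(y' | P y') ((y == y')%:R : R) = 1.
Proof.
move=> Py; rewrite (bigD1 y) //= eqxx big1 ?addr0 // => y' /andP [_ Hne].
by rewrite eq_sym (negbTE Hne).
Qed.

Lemma cXY (al : {set 'I_n}) :
  (\sum_(x : bits n | on_sub al x) (1:R)) * (\sum_(y : bits n | on_sub (~: al) y) (1:R)) = 2 ^+ n.
Proof.
rewrite !count_onsub -big_split /=.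
rewrite (eq_bigr (fun _ => 2)); first by rewrite prodr_const card_ord.
by move=> i _; rewrite inE; case: (i \in al) => /=; rewrite ?mulr1n ?mulr0n ?addr0 ?mulr1 ?mul1r.
Qed.

Lemma count_gt0 (al : {set 'I_n}) : 0 < \sum_(x : bits n | on_sub al x) (1:R).
Proof.
rewrite count_onsub; apply: prodr_gt0 => i _.
by apply: (@lt_le_trans _ _ 1); [exact: ltr01 | rewrite lerDl ler0n].
Qed.

Lemma upper_al (al : {set 'I_n}) :
  \sum_(f : {ffun bits n -> bool}) complex.Re (purity al (psif R f)) <=
  Kf R n * ((\sum_(x : bits n | on_sub al x) (1:R))^-1
          + (\sum_(y : bits n | on_sub (~: al) y) (1:R))^-1).
Proof.
set cX := \sum_(x : bits n | on_sub al x) (1:R).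
set cY := \sum_(y : bits n | on_sub (~: al) y) (1:R).
have cX0 : 0 < cX by apply: count_gt0.
have cY0 : 0 < cY by apply: count_gt0.
have Hc : cX * cY = 2 ^+ n by apply: cXY.
under eq_bigr do rewrite purity_psif.
rewrite -mulr_sumr.
have Ecount : \sum_(x : bits n | on_sub al x) \sum_(x' : bits n | on_sub al x')
  \sum_(y : bits n | on_sub (~: al) y) \sum_(y' : bits n | on_sub (~: al) y')
    Kf R n * ((x == x')%:R + (y == y')%:R) = Kf R n * (cX * cY ^+ 2 + cX ^+ 2 * cY).
  transitivity (\sum_(x : bits n | on_sub al x) \sum_(x' : bits n | on_sub al x')
     \sum_(y : bits n | on_sub (~: al) y) Kf R n * ((x == x')%:R * cY + 1)).
    apply: eq_bigr => x _; apply: eq_bigr => x' _; apply: eq_bigr => y Hy.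
    by rewrite -mulr_sumr big_split /= sum_eq1 // -sumC.
  transitivity (\sum_(x : bits n | on_sub al x) \sum_(x' : bits n | on_sub al x')
     Kf R n * ((x == x')%:R * cY ^+ 2 + cY)).
    apply: eq_bigr => x _; apply: eq_bigr => x' _.
    rewrite -mulr_sumr big_split /= (sumC (on_sub (~: al)) ((x == x')%:R * cY)).
    by rewrite -/cY expr2 mulrA.
  transitivity (\sum_(x : bits n | on_sub al x) Kf R n * (cY ^+ 2 + cX * cY)).
    apply: eq_bigr => x Hx.
    rewrite -mulr_sumr big_split /= -mulr_suml sum_eq1 // mul1r.
    by rewrite (sumC (on_sub al) cY) -/cX; ring.
  by rewrite -mulr_sumr (sumC (on_sub al) (cY ^+ 2 + cX * cY)) -/cX; ring.
apply: (@le_trans _ _ (sq R n ^+ 4 * (Kf R n * (cX * cY ^+ 2 + cX ^+ 2 * cY)))).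
  apply: ler_wpM2l; first by apply: exprn_ge0; apply: sqrtr_ge0.
  rewrite -Ecount.
  rewrite exchange_big /=; apply: ler_sum => x Hx.
  rewrite exchange_big /=; apply: ler_sum => x' Hx'.
  rewrite exchange_big /=; apply: ler_sum => y Hy.
  rewrite exchange_big /=; apply: ler_sum => y' Hy'.
  exact: Tbound.
have Hs : sq R n ^+ 4 = ((cX * cY) ^-1) ^+ 2.
  by rewrite Hc -sq2 -exprM.
rewrite Hs le_eqVlt; apply/orP; left; apply/eqP.
field; apply/andP; split; apply: lt0r_neq0 => //.
Qed.

End Upper2.



Section Final.
Variable R : realType.
Variable n : nat.

Lemma sum_invX :
  \sum_(al : {set 'I_n}) (\sum_(x : bits n | on_sub al x) (1:R))^-1 = (3 / 2) ^+ n.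
Proof.
under eq_bigr do rewrite count_onsub -prodfV.
rewrite (@sum_sets R n (fun b : bool => (1 + b%:R)^-1)).
by congr (_ ^+ _); rewrite /=; field.
Qed.

Lemma sum_invY :
  \sum_(al : {set 'I_n}) (\sum_(y : bits n | on_sub (~: al) y) (1:R))^-1 = (3 / 2) ^+ n.
Proof.
under eq_bigr do rewrite count_onsub -prodfV.
under eq_bigr do under eq_bigr do rewrite inE.
rewrite (@sum_sets R n (fun b : bool => (1 + (~~ b)%:R)^-1)).
by congr (_ ^+ _); rewrite /=; field.
Qed.

End Final.

Theorem mainTheorem12 (R : realType) :
  exists c1 c2 : R, 0 < c1 /\ 0 < c2 /\
    forall n : nat, (1 <= n)%N ->
      c1 * (3 / 4) ^+ n <= 1 - Cstar R n /\ 1 - Cstar R n <= c2 * (3 / 4) ^+ n.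
Proof.
exists 1, 2; split; first exact: ltr01.
split; first by rewrite ltr0n.
move=> n _.
set S := [set c | exists psi : qstate R n, normalized psi /\ c = conc_ent psi]%classic.
have W : (2 ^+ n)^-1 * (3 / 2) ^+ n = (3 / 4) ^+ n :> R.
  by rewrite -exprVn -exprMn; congr (_ ^+ _); field.
have p2 : 0 <= (2 ^+ n : R)^-1 by rewrite invr_ge0 exprn_ge0 // ler0n.
have ub : ubound S (1 - (3 / 4) ^+ n).
  move=> c [psi [Hpsi ->]]; rewrite /conc_ent.
  have H : (3 / 2) ^+ n <= \sum_(al : {set 'I_n}) complex.Re (purity al psi).
    by rewrite -sum_invX; apply: ler_sum => al _; apply: lower_al.
  rewrite -W lerD2l lerN2; exact: ler_wpM2l.
pose F (f : {ffun bits n -> bool}) := \sum_(al : {set 'I_n}) complex.Re (purity al (psif R f)).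
have [f _ Hf] := @arg_minP _ _ _ [ffun _ => false] xpredT F isT.
have K1 := Kf_ge1 R n.
have HF : F f <= 2 * (3 / 2) ^+ n.
  have H1 : \sum_(g : {ffun bits n -> bool}) F f <= \sum_(g : {ffun bits n -> bool}) F g.
    by apply: ler_sum => g _; apply: Hf.
  have H2 : \sum_(g : {ffun bits n -> bool}) F g <= Kf R n * (2 * (3 / 2) ^+ n).
    rewrite /F exchange_big /=.
    apply: (@le_trans _ _ (\sum_(al : {set 'I_n}) Kf R n *
        ((\sum_(x : bits n | on_sub al x) (1:R))^-1
          + (\sum_(y : bits n | on_sub (~: al) y) (1:R))^-1))).
      by apply: ler_sum => al _; apply: upper_al.
    rewrite -mulr_sumr big_split /= sum_invX sum_invY; apply: ler_wpM2l; [exact: le_trans ler01 K1 | lra].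
  have H3 : \sum_(g : {ffun bits n -> bool}) F f = F f * Kf R n.
    by rewrite /Kf mulr_sumr; apply: eq_bigr => *; rewrite mulr1.
  rewrite H3 in H1.
  have H4 : F f * Kf R n <= (2 * (3 / 2) ^+ n) * Kf R n.
    by rewrite [X in _ <= X]mulrC; apply: le_trans H2.
  by rewrite ler_pM2r in H4 => //; apply: lt_le_trans K1; exact: ltr01.
have Sf : S (conc_ent (psif R f)) by exists (psif R f); split => //; apply: psif_norm.
have Cf : 1 - 2 * (3 / 4) ^+ n <= conc_ent (psif R f).
  rewrite /conc_ent -/(F f) -W lerD2l lerN2 mulrCA; exact: ler_wpM2l.
rewrite /Cstar -/S.
split.
  have : sup S <= 1 - (3 / 4) ^+ n by apply: ge_sup => //; exists (conc_ent (psif R f)).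
  rewrite mul1r; lra.
have : conc_ent (psif R f) <= sup S.
  by apply: ub_le_sup => //; exists (1 - (3 / 4) ^+ n).
lra.
Qed.
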